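(* Let $\mathcal E$ be an exchangeability system for a noncommutative probability space $(\mathcal A,\phi)$ and let $\mathcal B,\mathcal C\subseteq\mathcal A$ be subalgebras such that mixed cumulants vanish, i.e. for all $n$, all $X_1,\dots,X_n\in\mathcal B\cup\mathcal C$, every decomposition $[n]=I\sqcup J$ with $X_i\in\mathcal B$ for $i\in I$ and $X_j\in\mathcal C$ for $j\in J$, and every $\pi\in\Pi_n$ having a block that meets both $I$ and $J$, one has $K_\pi(X_1,\dots,X_n)=0$. Then $\mathcal B$ and $\mathcal C$ are $\mathcal E$-independent.
   Context: A noncommutative probability space is a pair $(\mathcal A,\phi)$ of a complex unital algebra $\mathcal A$ and a unital linear functional $\phi$. An exchangeability system $\mathcal E$ for $(\mathcal A,\phi)$ consists of a noncommutative probability space $(\mathcal U,\tilde\phi)$ and a family $(\iota_k)_{k\in\mathbb N}$ of embeddings (injective unital algebra homomorphisms) $\iota_k:\mathcal A\to\mathcal A_k\subseteq\mathcal U$ with $\tilde\phi\circ\iota_k=\phi$; write $X^{(k)}=\iota_k(X)$. It is required that for all $X_1,\dots,X_n\in\mathcal A$, all indices $i_1,\dots,i_n\in\mathbb N$ and every bijection $\sigma$ of $\mathbb N$, $\tilde\phi(X_1^{(i_1)}\cdots X_n^{(i_n)})=\tilde\phi(X_1^{(\sigma(i_1))}\cdots X_n^{(\sigma(i_n))})$; this value depends only on the kernel of $j\mapsto i_j$ and for a partition $\sigma$ of $[n]$ it is denoted $\phi_\sigma(X_1,\dots,X_n)$. $\Pi_n$ is the lattice of set partitions of $[n]$ ordered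 by refinement, with Möbius function $\mu$; $K_\pi(X_1,\dots,X_n)=\sum_{\sigma\le\pi}\phi_\sigma(X_1,\dots,X_n)\mu(\sigma,\pi)$. Subalgebras $\mathcal B,\mathcal C$ are $\mathcal E$-independent if for all $X_1,\dots,X_n\in\mathcal B\cup\mathcal C$ and every decomposition $[n]=I\sqcup J$ with $X_i\in\mathcal B$ for $i\in I$, $X_i\in\mathcal C$ for $i\in J$, one has $\phi_\pi(X_1,\dots,X_n)=\phi_{\pi'}(X_1,\dots,X_n)$ whenever $\pi,\pi'\in\Pi_n$ satisfy $\pi|_I=\pi'|_I$ and $\pi|_J=\pi'|_J$. *)

(* Defs.v *)
From HB Require Import structures.
From mathcomp Require Import all_boot all_order all_algebra.
From mathcomp Require Import complex.
From mathcomp Require Import reals.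
Set Implicit Arguments. Unset Strict Implicit. Unset Printing Implicit Defensive.
Import Order.TTheory GRing.Theory Num.Theory.
Local Open Scope ring_scope.

Section NCProb.
Variable R : realType.
Local Notation C := (complex R).

Definition unital_functional (A : algType C) (phi : A -> C) : Prop :=
  (forall (a : C) (x y : A), phi (a *: x + y) = a * phi x + phi y) /\ phi 1 = 1.

Definition embedding (A U : algType C) (f : A -> U) : Prop :=
  [/\ forall (a : C) (x y : A), f (a *: x + y) = a *: f x + f y,
      forall x y : A, f (x * y) = f x * f y,
      f 1 = 1
    & injective f].

Definition is_subalgebra (A : algType C) (B : {pred A}) : Prop :=
  [/\ 0 \in B,
      forall (a : C) x y, x \in B -> y \in B -> a *: x + y \in B
    & forall x y, x \in B -> y \in B -> x * y \in B].

Definition exchangeability_system (A U : algType C) (phi : A -> C)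
    (phit : U -> C) (iota : nat -> A -> U) : Prop :=
  [/\ unital_functional phit,
      forall k, embedding (iota k),
      forall k (x : A), phit (iota k x) = phi x
    & forall n (X : 'I_n -> A) (i : 'I_n -> nat) (s : nat -> nat),
        bijective s ->
        phit (\prod_(j < n) iota (i j) (X j)) =
        phit (\prod_(j < n) iota (s (i j)) (X j))].

End NCProb.

Definition is_part n (P : {set {set 'I_n}}) : bool := partition P [set: 'I_n].

Definition refines n (s p : {set {set 'I_n}}) : bool :=
  [forall B in s, exists D in p, B \subset D].

(* Moebius function of Pi_n, by the standard recursion
   mu(s,s) = 1, mu(s,p) = - sum_{s <= t < p} mu(s,t) for s < p, 0 otherwise;
   k is fuel (chains in Pi_n have length < n+1). *)
Fixpoint mobius_rec (k : nat) n (s p : {set {set 'I_n}}) : int :=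
  match k with
  | 0 => (s == p)%:R
  | k'.+1 =>
      if s == p then 1
      else if refines s p then
        - \sum_(t : {set {set 'I_n}} | [&& is_part t, refines s t,
                                          refines t p & t != p])
            mobius_rec k' s t
      else 0
  end.

Definition mobius n (s p : {set {set 'I_n}}) : int := mobius_rec n.+1 s p.

(* block index function j |-> index of the block of s containing j;
   its kernel is the partition s *)
Definition block_index n (s : {set {set 'I_n}}) (j : 'I_n) : nat :=
  index (pblock s j) (enum s).

Definition restr n (p : {set {set 'I_n}}) (I : {set 'I_n}) : {set {set 'I_n}} :=
  [set B :&: I | B in p] :\ set0.

Section Cumulants.
Variable R : realType.
Local Notation C := (complex R).
Variables (A U : algType C) (phit : U -> C) (iota : nat -> A -> U).

(* phi_sigma(X_1..X_n) = phit(X_1^(i_1) ... X_n^(i_n)) with ker i = sigma *)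
Definition phi_part n (s : {set {set 'I_n}}) (X : 'I_n -> A) : C :=
  phit (\prod_(j < n) iota (block_index s j) (X j)).

Definition cumulant n (p : {set {set 'I_n}}) (X : 'I_n -> A) : C :=
  \sum_(s : {set {set 'I_n}} | is_part s && refines s p)
     phi_part s X * (mobius s p)%:~R.

Definition E_independent (B D : {pred A}) : Prop :=
  forall n (X : 'I_n -> A) (I : {set 'I_n}),
    (forall i, i \in I -> X i \in B) ->
    (forall i, i \notin I -> X i \in D) ->
    forall p p' : {set {set 'I_n}}, is_part p -> is_part p' ->
      restr p I = restr p' I -> restr p (~: I) = restr p' (~: I) ->
      phi_part p X = phi_part p' X.

Definition mixed_cumulants_vanish (B D : {pred A}) : Prop :=
  forall n (X : 'I_n -> A) (I : {set 'I_n}),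
    (forall i, i \in I -> X i \in B) ->
    (forall i, i \notin I -> X i \in D) ->
    forall p : {set {set 'I_n}}, is_part p ->
      (exists2 Bl, Bl \in p & (Bl :&: I != set0) && (Bl :&: ~: I != set0)) ->
      cumulant p X = 0.

End Cumulants.

(* Main.v *)
Require Import Defs.
From HB Require Import structures.
From mathcomp Require Import all_boot all_order all_algebra.
From mathcomp Require Import complex.
From mathcomp Require Import reals.
From mathcomp Require Import zify.
Set Implicit Arguments. Unset Strict Implicit. Unset Printing Implicit Defensive.
Import Order.TTheory GRing.Theory Num.Theory.

Section Comb.
Variable n : nat.
Local Notation PT := {set {set 'I_n}}.

Lemma part_cover (s : PT) x : is_part s -> x \in cover s.
Proof. by case/and3P => /eqP -> _ _; rewrite inE. Qed.

Lemma part_triv (s : PT) : is_part s -> trivIset s.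
Proof. by case/and3P. Qed.

Lemma part_ne0 (s : PT) B : is_part s -> B \in s -> B != set0.
Proof. by case/and3P => _ _ h0 hB; apply: contraNneq h0 => <-. Qed.

Lemma refines_refl (s : PT) : refines s s.
Proof. by apply/forall_inP => B hB; apply/exists_inP; exists B. Qed.

Lemma refines_trans (s t p : PT) : refines s t -> refines t p -> refines s p.
Proof.
move=> /forall_inP st /forall_inP tp; apply/forall_inP => B /st /exists_inP [D hD BD].
have /exists_inP [E hE DE] := tp D hD.
by apply/exists_inP; exists E => //; apply: subset_trans DE.
Qed.

Lemma refines_card (s p : PT) : is_part s -> is_part p -> refines s p ->
  #|p| <= #|s| /\ (#|s| = #|p| -> s = p).
Proof.
move=> ps pp /forall_inP sp.
pose f (B : {set 'I_n}) := odflt set0 [pick D in p | B \subset D].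
have fP B : B \in s -> f B \in p /\ B \subset f B.
  move=> hB; rewrite /f; case: pickP => [D /andP[]//|h].
  have /exists_inP [D hD BD] := sp B hB.
  by have := h D; rewrite hD BD.
have funiq B D : B \in s -> D \in p -> B \subset D -> f B = D.
  move=> hB hD BD; have [fp Bf] := fP B hB.
  have /set0Pn [x xB] := part_ne0 ps hB.
  rewrite -(def_pblock (part_triv pp) fp (subsetP Bf x xB)).
  by rewrite (def_pblock (part_triv pp) hD (subsetP BD x xB)).
have pE : p = f @: s.
  apply/setP => D; apply/idP/idP.
    move=> hD; have /set0Pn [x xD] := part_ne0 pp hD.
    have xs := part_cover x ps.
    have hB := pblock_mem xs.
    have [fp Bf] := fP _ hB.
    have xf := subsetP Bf x (etrans (mem_pblock s x) xs).
    apply/imsetP; exists (pblock s x) => //.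
    by rewrite -(def_pblock (part_triv pp) hD xD) (def_pblock (part_triv pp) fp xf).
  by case/imsetP => B hB ->; case: (fP B hB).
split; first by rewrite pE leq_imset_card.
move=> hc; have /imset_injP finj : #|f @: s| == #|s| by rewrite -pE hc.
have fid B : B \in s -> f B = B.
  move=> hB; have [fp Bf] := fP B hB; apply/eqP; rewrite eqEsubset Bf andbT.
  apply/subsetP => x xf.
  have xs := part_cover x ps.
  have hB' := pblock_mem xs.
  have xB' : x \in pblock s x by rewrite mem_pblock.
  have [fp' Bf'] := fP _ hB'.
  have e : f (pblock s x) = f B.
    by rewrite -(def_pblock (part_triv pp) fp xf) (def_pblock (part_triv pp) fp' (subsetP Bf' x xB')).
  by rewrite -(finj _ _ hB' hB e).
apply/eqP; rewrite eqEcard hc leqnn andbT; apply/subsetP => B hB.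
by rewrite -(fid B hB); case: (fP B hB).
Qed.

Lemma refines_lt (s p : PT) : is_part s -> is_part p -> refines s p -> s != p ->
  #|p| < #|s|.
Proof.
move=> ps pp sp nsp; have [le eqc] := refines_card ps pp sp.
rewrite ltn_neqAle le andbT; apply: contra nsp => /eqP h; apply/eqP; apply: eqc.
by rewrite h.
Qed.

Lemma refines_anti (s p : PT) : is_part s -> is_part p -> refines s p ->
  refines p s -> s = p.
Proof.
move=> ps pp sp ps'; have [l1 e] := refines_card ps pp sp.
have [l2 _] := refines_card pp ps ps'.
by apply: e; apply/eqP; rewrite eqn_leq l1 l2.
Qed.

Lemma part_card (s : PT) : is_part s -> #|s| <= n.
Proof.
move=> ps; have e := card_partition ps; rewrite cardsT card_ord in e; rewrite [X in _ <= X]e.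
rewrite -sum1_card; apply: leq_sum => B hB; rewrite card_gt0; exact: part_ne0 ps hB.
Qed.

Lemma mobius_stable k (s p : PT) : is_part s -> is_part p -> #|s| < #|p| + k ->
  mobius_rec k s p = mobius_rec k.+1 s p.
Proof.
elim: k p => [|k IH] p ps pp hc /=.
  rewrite addn0 in hc.
  case: eqP => [e|ne]; first by rewrite e ltnn in hc.
  case: ifP => // sp; have [le _] := refines_card ps pp sp.
  by rewrite leqNgt hc in le.
case: eqP => // ne; case: ifP => // sp; congr (GRing.opp _).
apply: eq_bigr => t /and4P [pt st tp tnp]; apply: IH => //.
have := refines_lt pt pp tp tnp; move: hc; rewrite addnS; lia.
Qed.

Local Open Scope ring_scope.
Lemma mobius_rec_eq (s p : PT) : is_part s -> is_part p -> refines s p -> s != p ->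
  mobius s p = - \sum_(t : PT | [&& is_part t, refines s t, refines t p & t != p])
            mobius s t.
Proof.
move=> ps pp sp nsp; rewrite /mobius /= (negbTE nsp) sp; congr (- _).
apply: eq_bigr => t /and4P [pt st tp tnp]; apply: mobius_stable => //.
have := part_card ps; have := refines_lt pt pp tp tnp; lia.
Qed.

Lemma mobius_id (s : PT) : mobius s s = 1.
Proof. by rewrite /mobius /= eqxx. Qed.

Lemma mobius_sum (s p : PT) : is_part s -> is_part p -> refines s p ->
  \sum_(t : PT | is_part t && refines s t && refines t p) mobius s t = (s == p)%:R.
Proof.
move=> ps pp sp; rewrite (bigD1 p) /=; last by rewrite pp sp refines_refl.
case: eqP => [e|ne].
  subst s; rewrite mobius_id big1 ?addr0 // => t /andP [/andP[/andP[pt st] tp] tnp].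
  by rewrite (refines_anti pt pp tp st) eqxx in tnp.
rewrite (mobius_rec_eq ps pp sp); last by apply/eqP.
rewrite (eq_bigl (fun t => [&& is_part t, refines s t, refines t p & t != p])).
  by rewrite addNr.
by move=> t; rewrite !andbA.
Qed.



Lemma restr_transfer (p p' : PT) (J B D : {set 'I_n}) : restr p J = restr p' J -> D \in p ->
  B \subset D -> B \subset J -> B != set0 -> exists2 D', D' \in p' & B \subset D'.
Proof.
move=> e hD BD BJ Bne.
have BDJ : B \subset D :&: J by rewrite subsetI BD BJ.
have hDJ : D :&: J \in restr p J.
  rewrite /restr !inE (imset_f (fun B0 => B0 :&: J) hD) andbT.
  apply: contra Bne => /eqP h; rewrite h subset0 in BDJ; exact: BDJ.
move: hDJ; rewrite e /restr !inE => /andP [_ /imsetP [D' hD' eqD]].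
by exists D' => //; apply: subset_trans BDJ _; rewrite eqD subsetIl.
Qed.

Definition nonmixed (I : {set 'I_n}) (s : PT) :=
  [forall B in s, (B :&: I == set0) || (B :&: ~: I == set0)].

Lemma refines_transfer (I : {set 'I_n}) (p p' s : PT) : is_part s -> nonmixed I s ->
  restr p I = restr p' I -> restr p (~: I) = restr p' (~: I) ->
  refines s p -> refines s p'.
Proof.
move=> ps /forall_inP nm eI eJ /forall_inP sp; apply/forall_inP => B hB.
have /exists_inP [D hD BD] := sp B hB.
have Bne := part_ne0 ps hB.
apply/exists_inP.
case/orP: (nm B hB) => /eqP h.
  have BJ : B \subset ~: I.
    by apply/subsetP => x xB; rewrite inE; apply/negP => xI;
       have := in_set0 x; rewrite -h inE xB xI.
  by have [D' ? ?] := restr_transfer eJ hD BD BJ Bne; exists D'.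
have BI : B \subset I.
  by apply/subsetP => x xB; apply/negPn/negP => xI;
     have := in_set0 x; rewrite -h !inE xB xI.
by have [D' ? ?] := restr_transfer eI hD BD BI Bne; exists D'.
Qed.

Lemma inner_sum (K : numFieldType) (F : PT -> K) (p t : PT) : is_part p ->
  is_part t -> refines t p ->
  \sum_(s | (is_part s && refines s p) && (is_part t && refines t s))
     F t * (mobius t s)%:~R = F t * (t == p)%:R.
Proof.
move=> pp pt tp; rewrite -mulr_sumr; congr (_ * _).
have e := mobius_sum pt pp tp.
have -> : ((t == p)%:R : K) = ((t == p)%:R : int)%:~R by case: (t == p).
rewrite -e mulrz_sumr.
by apply: eq_bigl => s; rewrite pt /=; case: (is_part s); rewrite //= andbC.
Qed.

Lemma inversion (K : numFieldType) (F : PT -> K) (p : PT) : is_part p ->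
  \sum_(s | is_part s && refines s p)
     \sum_(t | is_part t && refines t s) F t * (mobius t s)%:~R = F p.
Proof.
move=> pp.
rewrite (exchange_big_dep (fun t => is_part t && refines t p)) /=; last first.
  by move=> s t /andP[_ sp] /andP[pt ts]; rewrite pt (refines_trans ts sp).
rewrite (bigD1 p) /=; last by rewrite pp refines_refl.
rewrite inner_sum ?refines_refl // eqxx mulr1 big1 ?addr0 // => t /andP [/andP[pt tp] tnp].
by rewrite inner_sum // (negbTE tnp) mulr0.
Qed.

End Comb.
Local Open Scope ring_scope.

Theorem proposition2p10 (R : realType) (A U : algType (complex R))
    (phi : A -> complex R) (phit : U -> complex R) (iota : nat -> A -> U)
    (B D : {pred A}) :
  unital_functional phi ->
  exchangeability_system phi phit iota ->
  is_subalgebra B -> is_subalgebra D ->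
  mixed_cumulants_vanish phit iota B D ->
  E_independent phit iota B D.
Proof.
move=> _ _ _ _ hmix n X I hB hD p p' pp pp' eI eJ.
have key q : is_part q -> phi_part phit iota q X =
    \sum_(s | is_part s && refines s q && nonmixed I s) cumulant phit iota s X.
  move=> pq; rewrite -[LHS](inversion (fun t => phi_part phit iota t X) pq).
  rewrite (bigID (nonmixed I)) /= [X in _ + X]big1 ?addr0 // => s /andP [/andP [ps sq]].
  move/forall_inPn => [Bl hBl]; rewrite negb_or => /andP [h1 h2].
  by apply: (hmix _ X I hB hD s ps); exists Bl; [exact: hBl | rewrite h1 h2].
rewrite (key p pp) (key p' pp'); apply: eq_bigl => s.
case ps: (is_part s) => //=; case nm: (nonmixed I s); rewrite ?andbF //= !andbT.
apply/idP/idP; first exact: (refines_transfer ps nm eI eJ).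
by apply: (refines_transfer ps nm (esym eI) (esym eJ)).
Qed.
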